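(* Let $G$ be a finite connected $k$-regular simple graph on $n\ge 2$ vertices, and let $\mu_1$ be the second largest eigenvalue of its adjacency matrix. Then $$k-\mu_1 < 2k\,\lambda(G)\sqrt{\frac{n}{\lfloor n/2\rfloor}}.$$
   Context: The eigenvalues of the adjacency matrix of $G$ are listed as $\mu_0\ge\mu_1\ge\cdots\ge\mu_{n-1}$ (so $\mu_0=k$ for connected $k$-regular $G$). An $L(2,1)$-colouring of $G$ is a map $f:V\to\mathbb{Z}_{\ge 0}$ with $|f(u)-f(v)|\ge 2$ whenever $u,v$ are adjacent and $|f(u)-f(v)|\ge 1$ whenever $u,v$ are at distance two. Its span is $\max f-\min f$, and $\lambda(G)$ denotes the minimum span over all $L(2,1)$-colourings of $G$. *)

(* Defs.v *)
From HB Require Import structures.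
From mathcomp Require Import all_boot all_order all_algebra.
Set Implicit Arguments. Unset Strict Implicit. Unset Printing Implicit Defensive.
Import Order.TTheory GRing.Theory Num.Theory.

Definition simple_graph (n : nat) (e : rel 'I_n) : Prop :=
  symmetric e /\ irreflexive e.

Definition regular (n : nat) (e : rel 'I_n) (k : nat) : Prop :=
  forall v : 'I_n, #|[set w | e v w]| = k.

Definition connected_graph (n : nat) (e : rel 'I_n) : Prop :=
  forall u v : 'I_n, connect e u v.

Definition adjmx (R : nzRingType) (n : nat) (e : rel 'I_n) : 'M[R]_n :=
  (\matrix_(i, j) (e i j)%:R)%R.

Definition dist2 (n : nat) (e : rel 'I_n) (u v : 'I_n) : bool :=
  [&& u != v, ~~ e u v & [exists w, e u w && e w v]].

Definition L21_colouring (n : nat) (e : rel 'I_n) (f : 'I_n -> nat) : Prop :=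
  (forall u v, e u v -> (2 <= `|f u - f v|)%N) /\
  (forall u v, dist2 e u v -> f u != f v).

(* span = max f - min f (truncated subtraction makes the double max exact). *)
Definition span (n : nat) (f : 'I_n -> nat) : nat :=
  \max_(u : 'I_n) \max_(v : 'I_n) (f u - f v).

Definition is_lambda21 (n : nat) (e : rel 'I_n) (l : nat) : Prop :=
  (exists f, L21_colouring e f /\ span f = l) /\
  (forall f, L21_colouring e f -> l <= span f).

(* s is the list of eigenvalues of A (with multiplicity) in non-increasing
   order: mu_0 >= mu_1 >= ... >= mu_(n-1). *)
Definition eigen_list (R : realFieldType) (n : nat) (A : 'M[R]_n) (s : seq R) : Prop :=
  [/\ size s = n, sorted (>=%R) s & char_poly A = \prod_(x <- s) ('X - x%:P)]%R.

(* Main.v *)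
Require Import Defs.
From HB Require Import structures.
From mathcomp Require Import all_boot all_order all_algebra.
From mathcomp Require Import zify ring lra.
Import Order.TTheory GRing.Theory Num.Theory.
Local Open Scope ring_scope.

Lemma eig_bound {R : rcfType} {n k : nat} {e : rel 'I_n} {a : R} :
  symmetric e -> regular e k -> root (char_poly (adjmx R e)) a -> `|a| <= k%:R.
Proof.
move=> sym reg; rewrite -eigenvalue_root_char => /eigenvalueP [v Hv vn0].
have [i0 _] : exists i0 : 'I_n, true.
  case: n e sym reg v Hv vn0 => [|m] e _ _ v _ vn0; last by exists ord0.
  by case/eqP: vn0; apply/matrixP => i [].
case: (@arg_maxP _ R _ i0 predT (fun j => `|v 0 j|)) => // i _ imax.
have vi0 : v 0 i != 0.
  apply: contra vn0 => /eqP vi; apply/eqP/matrixP => p j.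
  rewrite (ord1 p) mxE; apply/eqP; rewrite -normr_eq0 eq_le normr_ge0 andbT.
  by rewrite (le_trans (imax j _)) // vi normr0.
have H1 : a * v 0 i = \sum_j v 0 j * (e j i)%:R.
  have := congr1 (fun M : 'M[R]_(1,n) => M 0 i) Hv; rewrite !mxE => <-.
  by apply: eq_bigr => j _; rewrite mxE.
have H2 : `|a| * `|v 0 i| <= `|v 0 i| * k%:R.
  rewrite -normrM H1.
  apply: le_trans (ler_norm_sum _ _ _) _.
  have -> : k%:R = \sum_j ((e i j)%:R : R).
    rewrite -(reg i) -sum1dep_card natr_sum big_mkcond /=.
    by apply: eq_bigr => j _; case: (e i j).
  rewrite mulr_sumr; apply: ler_sum => j _.
  rewrite normrM sym; case: (e i j) => /=; rewrite ?mulr0 ?normr0 ?normr1 ?mulr1 //.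
  exact: imax. rewrite mulr0; exact: lexx.
rewrite mulrC in H2.
have vp : 0 < `|v 0 i| by rewrite normr_gt0.
by rewrite -(ler_pM2l vp).
Qed.

Theorem corollary2p3 (R : rcfType) (n k : nat) (e : rel 'I_n)
  (mu : seq R) (l : nat) :
  (2 <= n)%N ->
  simple_graph e -> connected_graph e -> regular e k ->
  eigen_list (adjmx R e) mu ->
  is_lambda21 e l ->
  k%:R - mu`_1 < 2 * k%:R * l%:R * Num.sqrt (n%:R / (n./2)%:R).
Proof.
move=> n2 [sym irr] conn reg [szmu _ cp] [[f [[fc _] spf]] _].
have [u [v euv]] : exists u v, e u v.
  have := conn (Ordinal (ltnW n2)) (Ordinal n2).
  case/connectP => [[|z p]] /=.
    by move=> _ /(congr1 val).
  by case/andP => ez _ _; exists (Ordinal (ltnW n2)), z.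
have k1 : (1 <= k)%N.
  rewrite -(reg u) card_gt0; apply/set0Pn; exists v; by rewrite inE.
have l2 : (2 <= l)%N.
  rewrite -spf /Defs.span.
  have h := fc u v euv.
  have hu : (f u - f v <= \max_(u0 : 'I_n) \max_(v0 : 'I_n) (f u0 - f v0))%N.
    apply: (leq_trans (@leq_bigmax _ (fun v0 : 'I_n => f u - f v0)%N v)).
    exact: (@leq_bigmax _ (fun u0 : 'I_n => \max_(v0 : 'I_n) (f u0 - f v0))%N u).
  have hv : (f v - f u <= \max_(u0 : 'I_n) \max_(v0 : 'I_n) (f u0 - f v0))%N.
    apply: (leq_trans (@leq_bigmax _ (fun v0 : 'I_n => f v - f v0)%N u)).
    exact: (@leq_bigmax _ (fun u0 : 'I_n => \max_(v0 : 'I_n) (f u0 - f v0))%N v).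
  rewrite /Defs.span; move: h hu hv; case: (leqP (f u) (f v)) => [le|lt]; [rewrite distnEr | rewrite distnEl ?(ltnW lt)] => //; lia.
have rt : root (char_poly (adjmx R e)) mu`_1.
  by rewrite cp root_prod_XsubC mem_nth // szmu.
have := eig_bound sym reg rt.
rewrite ler_norml => /andP [hm _].
have sq1 : 1 <= Num.sqrt (n%:R / (n./2)%:R :> R).
  rewrite -[X in X <= _]sqrtr1 ler_sqrt ?divr_ge0 ?ler0n //.
  have h2 : (0 < n./2)%N by move: n2; clear; case: n => [|[|m]].
  rewrite ler_pdivlMr ?ltr0n // ?mul1r ?ler_nat.
  lia.
have kp : (0 : R) < k%:R by rewrite ltr0n.
have lp : (2 : R) <= l%:R by rewrite ler_nat.
apply: (lt_le_trans (y := 2 * k%:R * l%:R)).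
  have hl : 2 * k%:R * 2 <= 2 * k%:R * l%:R :> R by rewrite ler_pM2l ?mulr_gt0.
  lra.
rewrite -{1}(mulr1 (2 * k%:R * l%:R)) ler_pM2l // !mulr_gt0 //.
apply: lt_le_trans lp; done.
Qed.
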